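(* Let $n,\ell$ be positive integers and $0<\epsilon<0.5$. Let $\boldsymbol{c}\in\mathbb{Z}_2^n$ be ''0''-$3$-dominant and $\ell$-run-length limited, and let $\boldsymbol{d}\in\mathbb{Z}_2^n$ be $\epsilon$-balanced. Then the DNA sequence $\tau^{-1}(\boldsymbol{c}\|\boldsymbol{d})$ is $3$-SSA, $\ell$-run-length limited and GC-$\epsilon$-balanced.
   Context: $\Sigma_{\rm DNA}=\{\mathrm{A},\mathrm{T},\mathrm{C},\mathrm{G}\}$ with complement $\overline{\mathrm A}=\mathrm T$, $\overline{\mathrm T}=\mathrm A$, $\overline{\mathrm C}=\mathrm G$, $\overline{\mathrm G}=\mathrm C$; the reverse-complement of $(x_1,\dots,x_n)$ is $(\overline{x_n},\dots,\overline{x_1})$. A DNA sequence is $m$-SSA if it has no two non-overlapping blocks of consecutive symbols of length $\ge m$ that are reverse-complements of each other. A binary sequence is ''0''-$m$-dominant if every block of $m$ consecutive symbols contains more than $m/2$ zeros. A sequence is $\ell$-run-length limited if every maximal run of identical consecutive symbols has length at most $\ell$. A binary $\boldsymbol{d}\in\mathbb{Z}_2^n$ is $\epsilon$-balanced if $|\mathrm{wt}(\boldsymbol{d})/n-0.5|\le\epsilon$ (Hamming weight). For $\boldsymbol{x}\in\Sigma_{\rm DNA}^n$, $\mathrm{wt}_{\rm GC}(\boldsymbol{x})$ is the number of positions equal to G or C, and $\boldsymbol{x}$ is GC-$\epsilon$-balanced if $|\mathrm{wt}_{\rm GC}(\boldsymbol{x})/n-0.5|\le\epsilon$. $\tau(\mathrm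 T)=00$, $\tau(\mathrm C)=01$, $\tau(\mathrm A)=10$, $\tau(\mathrm G)=11$, extended symbolwise; for $\boldsymbol{x},\boldsymbol{y}\in\mathbb{Z}_2^n$, $\boldsymbol{x}\|\boldsymbol{y}=(x_1y_1,\dots,x_ny_n)$. *)

(* Defs.v *)
From HB Require Import structures.
From mathcomp Require Import all_boot all_order all_algebra.
Set Implicit Arguments. Unset Strict Implicit. Unset Printing Implicit Defensive.
Import Order.TTheory GRing.Theory Num.Theory.

Inductive nucleotide := NA | NT | NC | NG.

Definition nuc_code (x : nucleotide) : nat :=
  match x with NA => 0 | NT => 1 | NC => 2 | NG => 3 end.
Definition nuc_decode (n : nat) : option nucleotide :=
  match n with 0 => Some NA | 1 => Some NT | 2 => Some NC | 3 => Some NG | _ => None end.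
Lemma nuc_codeK : pcancel nuc_code nuc_decode. Proof. by case. Qed.
HB.instance Definition _ := Countable.copy nucleotide (pcan_type nuc_codeK).
Definition nuc_enum := [:: NA; NT; NC; NG].
Lemma nuc_enumP : Finite.axiom nuc_enum. Proof. by case. Qed.
HB.instance Definition _ := isFinite.Build nucleotide nuc_enumP.

Definition comp (x : nucleotide) : nucleotide :=
  match x with NA => NT | NT => NA | NC => NG | NG => NC end.

Definition revcomp (s : seq nucleotide) : seq nucleotide := rev (map comp s).

Definition block {X : Type} (s : seq X) (i k : nat) : seq X := take k (drop i s).

Definition SSA (m : nat) (x : seq nucleotide) : Prop :=
  forall i j k, m <= k -> i + k <= size x -> j + k <= size x ->
    (i + k <= j \/ j + k <= i) ->
    block x i k <> revcomp (block x j k).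

(* binary sequences: Z_2 represented by bool, 1 = true, 0 = false *)
Definition zero_dominant (m : nat) (c : seq bool) : Prop :=
  forall i, i + m <= size c -> m < 2 * count (fun b => b == false) (block c i m).

(* A run is x[i..i+k) (k > 0) with all symbols equal;
   it is maximal if it cannot be extended to the left or to the right. *)
Definition rll {X : eqType} (l : nat) (s : seq X) : Prop :=
  forall (x0 : X) (i k : nat), 0 < k -> i + k <= size s ->
    (forall j, i <= j < i + k -> nth x0 s j = nth x0 s i) ->
    (i = 0 \/ nth x0 s i.-1 != nth x0 s i) ->
    (i + k = size s \/ nth x0 s (i + k) != nth x0 s i) ->
    k <= l.

Definition wt (d : seq bool) : nat := count id d.

Local Open Scope ring_scope.
Definition balanced (R : realFieldType) (eps : R) (d : seq bool) : Prop :=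
  `| (wt d)%:R / (size d)%:R - 2^-1 | <= eps.

Definition wt_GC (x : seq nucleotide) : nat := count (fun a => (a == NG) || (a == NC)) x.
Definition GC_balanced (R : realFieldType) (eps : R) (x : seq nucleotide) : Prop :=
  `| (wt_GC x)%:R / (size x)%:R - 2^-1 | <= eps.
Local Close Scope ring_scope.

Definition tau (x : nucleotide) : bool * bool :=
  match x with NT => (false, false) | NC => (false, true)
             | NA => (true, false) | NG => (true, true) end.
Definition tau_inv (p : bool * bool) : nucleotide :=
  match p with (false, false) => NT | (false, true) => NC
             | (true, false) => NA | (true, true) => NG end.
Lemma tau_invK : cancel tau tau_inv. Proof. by case. Qed.
Lemma tauK : cancel tau_inv tau. Proof. by case=> [[] []]. Qed.

Definition interleave (c d : seq bool) : seq (bool * bool) := zip c d.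

Definition tau_inv_seq (s : seq (bool * bool)) : seq nucleotide := map tau_inv s.

(* Main.v *)
Require Import Defs.
From mathcomp Require Import all_boot all_order all_algebra.
From mathcomp Require Import zify.
Import Order.TTheory GRing.Theory Num.Theory.

Lemma rll_const {X : eqType} (l : nat) (s : seq X) (x0 : X) :
  rll l s -> forall i k, 0 < k -> i + k <= size s ->
  (forall j, i <= j < i + k -> nth x0 s j = nth x0 s i) -> k <= l.
Proof.
move=> H.
suff: forall m i k, size s - k = m -> 0 < k -> i + k <= size s ->
  (forall j, i <= j < i + k -> nth x0 s j = nth x0 s i) -> k <= l.
  by move=> P i k; apply: (P _ i k erefl).
elim/ltn_ind=> m IH i k Em k0 ik Hc.
case: (boolP ((i == 0) || (nth x0 s i.-1 != nth x0 s i))) => [HL|].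
  case: (boolP ((i + k == size s) || (nth x0 s (i + k) != nth x0 s i))) => [HR|].
    apply: (H x0 i k k0 ik Hc).
    - by case/orP: HL => [/eqP|]; [left|right].
    - by case/orP: HR => [/eqP|]; [left|right].
  rewrite negb_or negbK => /andP[ne /eqP eq].
  have ik1 : i + k.+1 <= size s by rewrite addnS ltn_neqAle ne ik.
  have : k.+1 <= l.
    apply: (IH (size s - k.+1) _ i k.+1 erefl) => //; first by lia.
    move=> j /andP[ij]; rewrite addnS ltnS leq_eqVlt => /orP[/eqP->//|jk].
    by apply: Hc; rewrite ij jk.
  by move/ltnW.
rewrite negb_or negbK => /andP[ne /eqP eq].
have ik1 : i.-1 + k.+1 <= size s by lia.
have : k.+1 <= l.
  apply: (IH (size s - k.+1) _ i.-1 k.+1 erefl) => //; first by lia.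
  move=> j /andP[ij jk]; rewrite eq.
  case: (ltngtP j i.-1) => [|ji|->//]; first by lia.
  have ij' : i <= j by lia.
  by apply: Hc; rewrite ij' /=; lia.
by move/ltnW.
Qed.

Lemma comp_tau y : (tau (Defs.comp y)).1 = ~~ (tau y).1.
Proof. by case: y. Qed.

Lemma block3 (s : seq bool) i : i + 3 <= size s ->
  block s i 3 = [:: nth false s i; nth false s i.+1; nth false s i.+2].
Proof.
move=> H; apply: (@eq_from_nth _ false).
  by rewrite /block size_takel // size_drop; lia.
move=> t; rewrite /block size_takel ?size_drop; last lia.
move=> Ht.
rewrite nth_take //.
rewrite nth_drop.
by case: t Ht => [|[|[|t]]] Ht //=; rewrite ?addn0 ?addn1 ?addn2; lia.
Qed.

Lemma GC_count (c d : seq bool) : size c = size d ->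
  count (fun a => (a == NG) || (a == NC)) (map tau_inv (zip c d)) = count id d.
Proof.
elim: c d => [|a c IH] [|b d] //= [] /IH ->.
by case: a; case: b.
Qed.

Theorem lemma4 (R : realFieldType) (n l : nat) (eps : R)
  (c d : seq bool) :
  (0 < n)%N -> (0 < l)%N -> (0 < eps)%R -> (eps < 2^-1)%R ->
  size c = n -> size d = n ->
  zero_dominant 3 c -> rll l c -> balanced eps d ->
  let x := tau_inv_seq (interleave c d) in
  SSA 3 x /\ rll l x /\ GC_balanced eps x.
Proof.
move=> n0 l0 e0 e1 sc sd Hz Hr Hb x.
have sx : size x = n by rewrite /x /tau_inv_seq size_map /interleave size_zip sc sd minnn.
have cX : forall y0 t, t < n -> nth false c t = (tau (nth y0 x t)).1.
  move=> y0 t tn; rewrite /x /tau_inv_seq (nth_map (false,false)); last first.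
    by rewrite /interleave size_zip sc sd minnn.
  by rewrite tauK /interleave nth_zip ?sc ?sd.
split; last split.
- move=> i j k k3 ik jk _ E.
  have sdj : size (take k (drop j x)) = k by rewrite size_takel // size_drop; lia.
  have key : forall t, t < k -> nth NA x (i + t) = Defs.comp (nth NA x (j + (k - t.+1))).
    move=> t tk.
    have := congr1 (fun s => nth NA s t) E => /=.
    rewrite /block nth_take // nth_drop /revcomp nth_rev; last first.
      by rewrite size_map sdj.
    rewrite size_map sdj (nth_map NA); last by rewrite sdj; lia.
    by rewrite nth_take ?nth_drop //; lia.
  have ck : forall t, t < 3 -> nth false c (i + t) = ~~ nth false c (j + (k - t.+1)).
    move=> t t3; rewrite (cX NA) ?(cX NA) -?sx; try lia.
    by rewrite key ?comp_tau //; lia.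
  have h1 := Hz i ltac:(lia).
  have h2 := Hz (j + (k - 3)) ltac:(lia).
  rewrite !block3 in h1 h2; try lia.
  have := ck 0 erefl; have := ck 1 erefl; have := ck 2 erefl.
  rewrite addn0 addn1 addn2.
  have q1 : (j + (k - 3)).+1 = j + (k - 2) by lia.
  have q2 : (j + (k - 3)).+2 = j + (k - 0.+1) by lia.
  rewrite q2 q1 in h2.
  move: h1 h2.
  case: (nth false c i); case: (nth false c i.+1); case: (nth false c i.+2);
  case: (nth false c (j + (k - 3))); case: (nth false c (j + (k - 2)));
  case: (nth false c (j + (k - 0.+1))) => //.
- move=> x0 i k k0 ik Hc _ _.
  have := @rll_const _ l c false Hr i k k0; rewrite sc -sx; move=> /(_ ik); apply.
  move=> j ij; rewrite sx in ik; have jn : j < n by lia.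
  have i_n : i < n by lia.
  by rewrite (cX x0 j jn) (cX x0 i i_n) Hc.
- rewrite /GC_balanced sx -sd.
  have -> : wt_GC x = wt d.
    by rewrite /wt_GC /wt /x /tau_inv_seq /interleave GC_count // sc sd.
  exact: Hb.
Qed.
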